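(* For every integer $n\ge 0$, \[ \sum_{k=0}^{n}(-4)^k\frac{\binom{n}{k}}{\binom{1+2k}{k}}H_{1+2k} =\frac{2H_{1+2n}-H_n}{2(4n^2-1)}-\frac{4n^3+8n^2+7n-2}{(4n^2-1)^2}. \]
   Context: For an integer $m\ge 0$, $H_m$ denotes the $m$-th harmonic number: $H_0=0$ and $H_m=\sum_{j=1}^m \frac1j$ for $m\ge1$. $\binom{n}{k}$ is the usual binomial coefficient. *)

(* Defs.v *)
From HB Require Import structures.
From mathcomp Require Import all_boot all_order all_algebra.
Set Implicit Arguments. Unset Strict Implicit. Unset Printing Implicit Defensive.
Import Order.TTheory GRing.Theory Num.Theory.
Local Open Scope ring_scope.

Definition harmonic (m : nat) : rat := \sum_(1 <= j < m.+1) (j%:R)^-1.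

(* Main.v *)
Require Import Defs.
From HB Require Import structures.
From mathcomp Require Import all_boot all_order all_algebra.
From mathcomp Require Import ring lra zify.
Import Order.TTheory GRing.Theory Num.Theory.
Local Open Scope ring_scope.

Definition t (n k : nat) : rat := (-4 : rat) ^+ k * ('C(n, k)%:R / 'C(1 + 2 * k, k)%:R).

Lemma binC_pos k : ('C(1 + 2 * k, k)%:R : rat) != 0.
Proof. by rewrite pnatr_eq0 -lt0n bin_gt0; lia. Qed.

Lemma binC_rec k : (k.+2 * 'C(1 + 2 * k.+1, k.+1) = 2 * (2 * k + 3) * 'C(1 + 2 * k, k))%N.
Proof.
have h1 := mul_bin_diag (2 * k + 3)%N k.
have h2 := mul_bin_down (2 * k + 2)%N k.
have e1 : ((2 * k + 3).-1 = 2 * k + 2)%N by lia.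
have e2 : ((2 * k + 2).-1 = 1 + 2 * k)%N by lia.
have e3 : (1 + 2 * k.+1 = 2 * k + 3)%N by lia.
have e4 : (2 * k + 2 - k = k.+2)%N by lia.
rewrite e1 in h1; rewrite e2 e4 in h2; rewrite e3.
apply/eqP; rewrite -(eqn_pmul2l (ltn0Sn k)); apply/eqP.
rewrite mulnA (mulnC k.+1) -mulnA -h1.
rewrite mulnCA -h2. lia.
Qed.

Ltac pos k := have := ler0n rat k; lra.

Lemma t_up n k : t n k.+1 =
  t n k * (-2) * (n%:R - k%:R) * (k%:R + 2) / ((k%:R + 1) * (2 * k%:R + 3)).
Proof.
rewrite /t.
have hc := binC_pos k.
have hC : ('C(1 + 2 * k.+1, k.+1)%:R : rat) = 2 * (2 * k%:R + 3) * 'C(1 + 2 * k, k)%:R / (k%:R + 2).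
  have := congr1 (fun x : nat => (x%:R : rat)) (binC_rec k) => /=.
  rewrite !natrM !natrD /= => h.
  apply: (mulfI (_ : (k%:R + 2 : rat) != 0)); first by pos k.
  rewrite -[k.+2]addn2 natrD in h. rewrite h. field. pos k.
have hN : ('C(n, k.+1)%:R : rat) = (n%:R - k%:R) * 'C(n, k)%:R / (k%:R + 1).
  case: (leqP k n) => hkn.
    have := congr1 (fun x : nat => (x%:R : rat)) (mul_bin_left n k) => /=.
    rewrite !natrM natrB // -addn1 natrD => h.
    apply: (mulfI (_ : (k%:R + 1 : rat) != 0)); first by pos k.
    rewrite h. field. pos k.
  rewrite !bin_small ?mulr0 ?mul0r //; lia.
rewrite hC hN exprS. field. rewrite hc /=; apply/and3P; split; pos k.
Qed.

Lemma t_down n k : t n k = t n.+1 k * (n%:R + 1 - k%:R) / (n%:R + 1).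
Proof.
rewrite /t.
have hc := binC_pos k.
have hN : ('C(n, k)%:R : rat) = (n%:R + 1 - k%:R) * 'C(n.+1, k)%:R / (n%:R + 1).
  case: (leqP k n.+1) => hkn.
    have := congr1 (fun x : nat => (x%:R : rat)) (mul_bin_down n.+1 k) => /=.
    rewrite !natrM natrB // -addn1 natrD => h.
    apply: (mulfI (_ : (n%:R + 1 : rat) != 0)); first by pos n.
    rewrite h. field. pos n.
  rewrite !bin_small ?mulr0 ?mul0r //; lia.
rewrite hN. field. rewrite hc /=. pos n.
Qed.

Lemma t_out n : t n n.+1 = 0.
Proof. by rewrite /t bin_small // mul0r mulr0. Qed.

Lemma t_0 n : t n 0 = 1.
Proof. by rewrite /t !bin0 expr0 mul1r divr1. Qed.

Definition Tsum n := \sum_(0 <= k < n.+1) t n k.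

Lemma sum_ext n (f : nat -> rat) : \sum_(0 <= k < n.+2) t n k * f k = \sum_(0 <= k < n.+1) t n k * f k.
Proof. by rewrite big_nat_recr //= t_out mul0r addr0. Qed.

Definition Gf n k := - (k%:R * (2 * k%:R + 1)) / (n%:R + 1) * t n.+1 k.

Lemma G1 n k : (2 * n%:R + 3) * t n.+1 k - (2 * n%:R - 1) * t n k = Gf n k.+1 - Gf n k.
Proof.
rewrite /Gf (t_down n k) (t_up n.+1 k) -!natr1. field. apply/and3P; split; [pos n|pos k|pos k].
Qed.

Lemma Tsum_rec n : (2 * n%:R + 3) * Tsum n.+1 = (2 * n%:R - 1) * Tsum n.
Proof.
apply/eqP; rewrite -subr_eq0; apply/eqP.
have := @telescope_sumr_eq _ 0 n.+2 (Gf n) _ isT (fun k _ => G1 n k).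
rewrite sumrB -!mulr_sumr /Tsum.
have := sum_ext n (fun _ => 1). rewrite !(eq_bigr _ (fun i _ => mulr1 _)) => ->.
move=> ->. rewrite /Gf t_out t_0. field. pos n.
Qed.

Lemma q4 m : (4 * m%:R ^+ 2 - 1 : rat) != 0.
Proof.
rewrite -natrX -natrM subr_eq0 pnatr_eq1.
apply/eqP; lia.
Qed.

Lemma Tsum_val n : Tsum n = - 1 / (4 * n%:R ^+ 2 - 1).
Proof.
elim: n => [|n IH].
  by rewrite /Tsum big_nat1 t_0; field.
have h := Tsum_rec n. rewrite IH in h.
apply: (mulfI (_ : (2 * n%:R + 3 : rat) != 0)); first by pos n.
rewrite h -natr1. field. by rewrite nat1r !q4.
Qed.

Definition Q m j := j%:R * (2 * j%:R + 1) * t m j.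

Lemma Qstep m j : t m j * (j%:R * (3 - 2 * m%:R) - 4 * m%:R) = Q m j.+1 - Q m j.
Proof. rewrite /Q t_up -natr1. field. apply/andP; split; pos j. Qed.

Lemma Wrel m : \sum_(0 <= j < m.+1) t m j * (j%:R * (3 - 2 * m%:R) - 4 * m%:R) = 0.
Proof.
rewrite (telescope_sumr_eq (Q m)) //; first by rewrite /Q t_out mulr0 t_0; field.
by move=> k _; apply: Qstep.
Qed.

Definition V m := \sum_(0 <= j < m.+1) t m j * (4 * j%:R + 1).

Lemma V_val m : V m * (3 - 2 * m%:R) = Tsum m * (3 + 14 * m%:R).
Proof.
rewrite /V /Tsum !mulr_suml.
rewrite (eq_bigr (fun j => 4 * (t m j * (j%:R * (3 - 2 * m%:R) - 4 * m%:R)) + t m j * (3 + 14 * m%:R))); last by move=> j _; ring.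
by rewrite big_split /= -mulr_sumr Wrel mulr0 add0r.
Qed.

Lemma harmS k : harmonic (1 + 2 * k.+1) = harmonic (1 + 2 * k) + (2 * k%:R + 2)^-1 + (2 * k%:R + 3)^-1.
Proof.
have e : (1 + 2 * k.+1 = (1 + 2 * k).+2)%N by lia.
rewrite e /harmonic big_nat_recr //= big_nat_recr //=.
rewrite (_ : ((1 + 2 * k).+1 = 2 * k + 2)%N); last by lia.
rewrite (_ : ((2 * k + 2).+1 = 2 * k + 3)%N); last by lia.
rewrite !natrD; congr (_ + _^-1 + _^-1); ring.
Qed.

Definition h k := harmonic (1 + 2 * k).
Definition S n := \sum_(0 <= k < n.+1) t n k * h k.

Lemma Hk n k : (2 * n%:R + 3) * (t n.+1 k * h k) - (2 * n%:R - 1) * (t n k * h k)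
  = (Gf n k.+1 * h k.+1 - Gf n k * h k) + t n.+1 k.+1 * (4 * k%:R + 5) / (2 * (n%:R + 1)).
Proof.
rewrite /h harmS /Gf (t_down n k) (t_up n.+1 k) -!natr1. field.
apply/and4P; split; pos k || pos n.
Qed.

Lemma Vshift m : \sum_(0 <= k < m.+1) t m k.+1 * (4 * k%:R + 5) = V m - 1.
Proof.
rewrite /V -(sum_ext m (fun j => 4 * j%:R + 1)) [in RHS]big_nat_recl // t_0.
rewrite (_ : 4 * 0%:R + 1 = 1 :> rat); last by rewrite mulr0.
rewrite mul1r addrC addKr.
by apply: eq_bigr => k _; rewrite -natr1; congr (_ * _); ring.
Qed.

Lemma S_rec n : (2 * n%:R + 3) * S n.+1 - (2 * n%:R - 1) * S n
  = (V n.+1 - 1) / (2 * (n%:R + 1)).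
Proof.
rewrite /S -(sum_ext n h) !mulr_sumr -sumrB.
rewrite (eq_bigr _ (fun k _ => Hk n k)) big_split /=.
rewrite telescope_sumr // /Gf t_out mulr0 mul0r -mulr_suml.
rewrite Vshift t_0. field. pos n.
Qed.

Lemma odd3 m : (3 - 2 * m%:R : rat) != 0.
Proof. rewrite -natrM subr_eq0 eqr_nat; apply/eqP; lia. Qed.

Lemma harm1 n : harmonic n.+1 = harmonic n + (n%:R + 1)^-1.
Proof. by rewrite /harmonic big_nat_recr //= natr1. Qed.

Lemma main n : S n =
  (2 * harmonic (1 + 2 * n) - harmonic n) / (2 * (4 * n%:R ^+ 2 - 1))
    - (4 * n%:R ^+ 3 + 8 * n%:R ^+ 2 + 7 * n%:R - 2) / (4 * n%:R ^+ 2 - 1) ^+ 2.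
Proof.
elim: n => [|n IH].
  by rewrite /S big_nat1 t_0 /h /harmonic !big_nat1 big_geq.
have r := S_rec n.
move/eqP: r; rewrite subr_eq => /eqP r.
have eS : S n.+1 = ((V n.+1 - 1) / (2 * (n%:R + 1)) + (2 * n%:R - 1) * S n) / (2 * n%:R + 3).
  rewrite -r; field; pos n.
have eV : V n.+1 = Tsum n.+1 * (3 + 14 * n.+1%:R) / (3 - 2 * n.+1%:R).
  rewrite -V_val; field; by rewrite nat1r odd3.
rewrite eS eV Tsum_val IH /h harmS harm1.
rewrite -!natr1. field.
rewrite natr1 q4 odd3 q4 /=.
apply/and3P; split; pos n.
Qed.

Theorem theorem4 (n : nat) :
  \sum_(0 <= k < n.+1)
     (-4 : rat) ^+ k * ('C(n, k)%:R / 'C(1 + 2 * k, k)%:R) * harmonic (1 + 2 * k)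
  = (2 * harmonic (1 + 2 * n) - harmonic n) / (2 * (4 * n%:R ^+ 2 - 1))
    - (4 * n%:R ^+ 3 + 8 * n%:R ^+ 2 + 7 * n%:R - 2) / (4 * n%:R ^+ 2 - 1) ^+ 2.
Proof. rewrite -main /S; apply: eq_bigr => k _; by rewrite /t /h. Qed.
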